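(* Let $r\ge 3$ and let $T=T_0\oplus T_1$ be a finite-dimensional nilpotent module over the preprojective algebra $\Lambda$ of the graph with two vertices $0,1$ joined by $r$ edges, with graded socle filtration $0=U_0\subset U_1\subset U_2\subset\cdots$. Suppose $1\le j<k$ with $k-j$ even, and suppose the subquotient $U_k/U_j$ has a submodule of dimension vector $a\,\alpha_j+b\,\alpha_{j+1}$. Then $U_{k-1}/U_{j-1}$ has a submodule of dimension vector $b\,\alpha_{j+1}+c\,\alpha_j$ for some integer $c\le rb-a$. If moreover $j\ge 2$, then $c\ge b/r$.
   Context: Setup: $r\ge3$, $I=\{0,1\}$, Cartan matrix $\begin{pmatrix}2&-r\\-r&2\end{pmatrix}$, simple roots $\alpha_0,\alpha_1$. The graph has vertices $0,1$ and $r$ edges between them; the double quiver has arrows $0\to1$ and $1\to0$, one of each per edge, $\bar a$ denoting the reverse of $a$. Fix an orientation $\Omega$ (one arrow per edge), $\varepsilon(a)=\pm1$ according to $a\in\Omega$ or not. $\Lambda$ is the path algebra modulo the ideal generated by $\sum_a\varepsilon(a)\bar a a$. A $\Lambda$-module $T=T_0\oplus T_1$ is given by linear maps $x_a:T_{s(a)}\to T_{t(a)}$ for each arrow; nilpotent means all long enough paths act by $0$. The dimension vector of a graded module $S$ is $\dim S_0\,\alpha_0+\dim S_1\,\alpha_1$. For an index $k\ge1$, write $\alpha_k=\alpha_1$ if $k$ is odd and $\alpha_k=\alpha_0$ if $k$ is even, and similarly the vertex of $k$ is $1$ for $k$ odd, $0$ for $k$ even. The graded socle filtration is defined by $U_0=0$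 and, for $k\ge1$ with vertex $i$, $U_k=U_{k-1}+\{v\in T_i: x_a(v)\in U_{k-1}\text{ for all arrows }a\text{ with }s(a)=i\}$ (so $U_1=\mathrm{Soc}(T)\cap T_1$). Each $U_k$ is a submodule. *)

(* Defs.v *)
From HB Require Import structures.
From mathcomp Require Import all_boot all_order all_algebra.
Set Implicit Arguments. Unset Strict Implicit. Unset Printing Implicit Defensive.
Import GRing.Theory.
Local Open Scope ring_scope.

(* Representation of a graded module T = T_0 (+) T_1 over the double quiver of
   the graph with vertices 0,1 and r edges, over a field K.
   Vectors are ROW vectors: T_0 = 'rV_n0, T_1 = 'rV_n1, and a linear map
   T_i -> T_j is a matrix 'M_(n_i, n_j) acting by v |-> v *m M.
   For an edge e : 'I_r,
     A e : 'M_(n0,n1) is x_{a_e} for the arrow a_e : 0 -> 1 of e,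
     B e : 'M_(n1,n0) is x_{abar_e} for the reverse arrow abar_e : 1 -> 0.
   The orientation Omega is given by  orient : 'I_r -> bool,  where
   orient e = true iff a_e \in Omega (otherwise abar_e \in Omega). *)

Section Defs.
Variables (K : fieldType) (r n0 n1 : nat).
Variables (orient : 'I_r -> bool)
          (A : 'I_r -> 'M[K]_(n0, n1)) (B : 'I_r -> 'M[K]_(n1, n0)).

Definition eps_fwd (e : 'I_r) : K := if orient e then 1 else -1.
Definition eps_bwd (e : 'I_r) : K := - eps_fwd e.

(* The preprojective relation  sum_a eps(a) abar a = 0, split by vertex:
   at vertex 0 the arrows a starting there are the a_e (abar = abar_e), the
   path "abar a" acts by v |-> (v *m A e) *m B e;
   at vertex 1 the arrows a starting there are the abar_e (reverse a_e). *)
Definition preproj_rel : Prop :=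
  \sum_(e < r) eps_fwd e *: (A e *m B e) = 0 /\
  \sum_(e < r) eps_bwd e *: (B e *m A e) = 0.

(* Arrows of the double quiver: (e, true) = a_e : 0 -> 1, (e, false) = abar_e.
   On the total space T_0 (+) T_1 = 'rV_(n0 + n1) an arrow acts by a block
   matrix; a product of such matrices is the action of the corresponding
   path (and is 0 if the arrows are not composable). *)
Definition arrow_mx (x : 'I_r * bool) : 'M[K]_(n0 + n1) :=
  if x.2 then block_mx 0 (A x.1) 0 0 else block_mx 0 0 (B x.1) 0.

Definition nilpotent_rep : Prop :=
  exists N : nat, forall s : seq ('I_r * bool), size s = N ->
    foldr (fun x M => arrow_mx x *m M) 1%:M s = 0.

(* Graded subspaces of T, as pairs of row-spaces (S_0, S_1). *)
Definition gsub := ('M[K]_n0 * 'M[K]_n1)%type.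

Definition submod (S : gsub) : Prop :=
  forall e : 'I_r, (S.1 *m A e <= S.2)%MS /\ (S.2 *m B e <= S.1)%MS.

Definition gsubset (S S' : gsub) : Prop := (S.1 <= S'.1)%MS /\ (S.2 <= S'.2)%MS.

(* Vertex of an index k >= 1: true (= vertex 1) if k odd, false (= vertex 0)
   if k even. *)
Definition vert (k : nat) : bool := odd k.

Definition gdim (i : bool) (S : gsub) : nat :=
  if i then \rank S.2 else \rank S.1.

(* {v in T_0 : v *m A e \in W for all e}  and {v in T_1 : v *m B e \in W for all e} *)
Definition pre0 (W : 'M[K]_n1) : 'M[K]_n0 :=
  (\bigcap_(e < r) kermx (A e *m cokermx W))%MS.
Definition pre1 (W : 'M[K]_n0) : 'M[K]_n1 :=
  (\bigcap_(e < r) kermx (B e *m cokermx W))%MS.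

Fixpoint socle_filt (k : nat) : gsub :=
  match k with
  | 0 => (0, 0)
  | k'.+1 =>
      let U := socle_filt k' in
      if vert k'.+1 then (U.1, (U.2 + pre1 U.1)%MS)
      else ((U.1 + pre0 U.2)%MS, U.2)
  end.

Lemma pre0P (W : 'M[K]_n1) (v : 'rV[K]_n0) :
  reflect (forall e, (v *m A e <= W)%MS) (v <= pre0 W)%MS.
Proof.
apply: (iffP sub_bigcapmxP) => H e.
  by move: (H e isT) => /sub_kermxP; rewrite mulmxA submxE => /eqP.
by move: (H e); rewrite submxE => /eqP He _; apply/sub_kermxP; rewrite mulmxA.
Qed.

Lemma pre1P (W : 'M[K]_n0) (v : 'rV[K]_n1) :
  reflect (forall e, (v *m B e <= W)%MS) (v <= pre1 W)%MS.
Proof.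
apply: (iffP sub_bigcapmxP) => H e.
  by move: (H e isT) => /sub_kermxP; rewrite mulmxA submxE => /eqP.
by move: (H e); rewrite submxE => /eqP He _; apply/sub_kermxP; rewrite mulmxA.
Qed.

End Defs.

(* Main.v *)
Require Import Defs.
From HB Require Import structures.
From mathcomp Require Import all_boot all_order all_algebra.
From mathcomp Require Import zify.
Set Implicit Arguments. Unset Strict Implicit. Unset Printing Implicit Defensive.
Import GRing.Theory.

Section Helpers.
Local Open Scope ring_scope.

Lemma rank_cok (F : fieldType) m n k (M : 'M[F]_(m, n)) (Q : 'M[F]_(k, n)) :
  (\rank (M *m cokermx Q) + \rank Q = \rank (M + Q)%MS)%N.
Proof.
have := mxrank_mul_ker M (cokermx Q).
have E : (M :&: kermx (cokermx Q) :=: M :&: Q)%MS.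
  apply: cap_eqmx => //; apply/eqmxP/andP; split.
    by apply/rV_subP => v; rewrite sub_kermx submxE.
  by rewrite sub_kermx -submxE.
rewrite E => H. have := mxrank_sum_cap M Q. lia.
Qed.

Lemma sub_rowdiag (F : fieldType) (n : nat) (p_ : 'I_n -> nat) m
   (M : 'M[F]_(m, \sum_i p_ i)) (B : forall i, 'M[F]_(p_ i)) :
  (M <= \mxdiag_i B i)%MS <-> (forall i, submxrow M i <= B i)%MS.
Proof.
split.
  case/submxP => W ->{M} i.
  by rewrite -(submxrowK W) mul_mxrow_mxdiag mxrowK submxMl.
move=> H; rewrite -(submxrowK M).
have -> : \mxrow_i submxrow M i = \mxrow_i (submxrow M i *m pinvmx (B i) *m B i).
  by apply: eq_mxrow => i; rewrite mulmxKpV.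
by rewrite -mul_mxrow_mxdiag submxMl.
Qed.

Lemma pre0M (K : fieldType) (r n0 n1 : nat) (A : 'I_r -> 'M[K]_(n0, n1)) (W : 'M[K]_n1) m (v : 'M[K]_(m, n0)) :
  (v <= pre0 A W)%MS <-> (forall e, (v *m A e <= W)%MS).
Proof.
split => [/sub_bigcapmxP H e|H].
  by move: (H e isT) => /sub_kermxP; rewrite mulmxA submxE => /eqP.
apply/sub_bigcapmxP => e _.
by move: (H e); rewrite submxE => /eqP He; apply/sub_kermxP; rewrite mulmxA.
Qed.

Lemma pre1M (K : fieldType) (r n0 n1 : nat) (B : 'I_r -> 'M[K]_(n1, n0)) (W : 'M[K]_n0) m (v : 'M[K]_(m, n1)) :
  (v <= pre1 B W)%MS <-> (forall e, (v *m B e <= W)%MS).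
Proof.
split => [/sub_bigcapmxP H e|H].
  by move: (H e isT) => /sub_kermxP; rewrite mulmxA submxE => /eqP.
apply/sub_bigcapmxP => e _.
by move: (H e); rewrite submxE => /eqP He; apply/sub_kermxP; rewrite mulmxA.
Qed.


Lemma part1 (F : fieldType) (r np nq : nat) (X : 'I_r -> 'M[F]_(np,nq))
  (Y : 'I_r -> 'M[F]_(nq,np)) (eps : 'I_r -> F) (P P' Sp : 'M[F]_np) (Q Sq : 'M[F]_nq) :
  (forall e, eps e != 0) -> \sum_(e<r) eps e *: (X e *m Y e) = 0 ->
  (P' <= Sp)%MS -> (Q <= Sq)%MS ->
  (forall e, Sp *m X e <= Sq)%MS ->
  (forall e, Q *m Y e <= P)%MS ->
  (forall m (v : 'M_(m,np)), (forall e, v *m X e <= Q)%MS -> (v <= P')%MS) ->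
  (\rank (P + \sum_(e<r) <<Sq *m Y e>>)%MS - \rank P + (\rank Sp - \rank P') <= r * (\rank Sq - \rank Q))%N.
Proof.
move=> heps hrel hP'Sp hQSq hSX hQY hpre.
set Xr := \mxrow_(e < r) X e.
set Yr := \mxcol_(e < r) (eps e *: Y e).
set Sqr := \mxdiag_(e < r) Sq.
set Qr := \mxdiag_(e < r) Q.
set f := Xr *m cokermx Qr.
set g := Yr *m cokermx P.
have XY0 : Xr *m Yr = 0.
  rewrite mul_mxrow_mxcol -[RHS]hrel; apply: eq_bigr => e _; by rewrite scalemxAr.
have rSqr : \rank Sqr = (r * \rank Sq)%N.
  by rewrite rank_mxdiag sum_nat_const card_ord.
have rQr : \rank Qr = (r * \rank Q)%N.
  by rewrite rank_mxdiag sum_nat_const card_ord.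
have QrSqr : (Qr <= Sqr)%MS.
  apply/sub_rowdiag => e; apply: submx_trans hQSq.
  by move: (submx_refl Qr) => /sub_rowdiag; apply.
have SpXr : (Sp *m Xr <= Sqr)%MS.
  by apply/sub_rowdiag => e; rewrite /Xr mul_mxrow mxrowK.
have stA : (\rank Sp <= \rank (Sp *m f) + \rank P')%N.
  rewrite -{1}(mxrank_mul_ker Sp f) leq_add2l mxrankS //.
  apply: hpre => e.
  have : ((Sp :&: kermx f) *m Xr <= Qr)%MS.
    by rewrite submxE -mulmxA -sub_kermx capmxSr.
  move/sub_rowdiag => /(_ e); by rewrite mul_mxrow mxrowK.
have stB : (\rank (Sp *m f) + \rank Qr = \rank (Sp *m Xr + Qr)%MS)%N.
  by rewrite mulmxA rank_cok.
have stC : (Sp *m Xr + Qr <= Sqr :&: kermx g)%MS.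
  rewrite sub_capmx (addsmx_sub (Sp *m Xr) Qr Sqr) SpXr QrSqr /=.
  rewrite (addsmx_sub (Sp *m Xr) Qr (kermx g)) !sub_kermx.
  rewrite /g mulmxA -(mulmxA Sp) XY0 mulmx0 mul0mx eqxx /=.
  rewrite mulmxA -submxE /Qr /Yr mul_mxdiag_mxcol eqmx_col.
  apply/sumsmx_subP => e _; rewrite genmxE -scalemxAr scalemx_sub //.
have stD : (\rank Sqr = \rank (Sqr *m g) + \rank (Sqr :&: kermx g))%N.
  by rewrite mxrank_mul_ker.
have stE : (\rank (Sqr *m g) + \rank P = \rank (Sqr *m Yr + P)%MS)%N.
  by rewrite mulmxA rank_cok.
have stF : (\rank (P + \sum_(e<r) <<Sq *m Y e>>)%MS <= \rank (Sqr *m Yr + P)%MS)%N.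
  apply: mxrankS; rewrite addsmx_sub addsmxSr /=.
  apply/sumsmx_subP => e _; rewrite genmxE; apply: submx_trans (addsmxSl _ _).
  rewrite /Sqr /Yr mul_mxdiag_mxcol eqmx_col (sumsmx_sup e) // genmxE.
  have -> : Sq *m Y e = (eps e)^-1 *: (Sq *m (eps e *: Y e)).
    by rewrite -scalemxAr scalerA mulVf ?scale1r.
  by rewrite scalemx_sub.
have stC' := mxrankS stC.
have hPP : (\rank P <= \rank (P + \sum_(e<r) <<Sq *m Y e>>)%MS)%N by rewrite mxrankS ?addsmxSl.
have hQQ := mxrankS hQSq.
rewrite mulnBr -rSqr -rQr. 
have := mxrankS hP'Sp. 
lia.
Qed.

Lemma part2 (F : fieldType) (r np nq : nat)
  (Y : 'I_r -> 'M[F]_(nq,np)) (P : 'M[F]_np) (Q Sq : 'M[F]_nq) :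
  (forall m (w : 'M_(m,nq)), (forall e, w *m Y e <= P)%MS -> (w <= Q)%MS) ->
  (\rank Sq - \rank Q <= r * (\rank (P + \sum_(e<r) <<Sq *m Y e>>)%MS - \rank P))%N.
Proof.
move=> hpre.
set Sp' := (P + _)%MS.
set h := fun e => Y e *m cokermx P.
have key : forall s : seq 'I_r, (\rank Sq <= \rank ((\big[capmx/1%:M]_(e <- s) kermx (h e)) :&: Sq)%MS
     + \sum_(e <- s) \rank (Sq *m h e))%N.
  elim => [|e s IH].
    by rewrite big_nil big_nil cap1mx addn0.
  rewrite big_cons big_cons.
  set M := (_ :&: Sq)%MS in IH.
  have E1 := mxrank_mul_ker M (h e).
  have E2 : (\rank (M *m h e) <= \rank (Sq *m h e))%N.
    by rewrite mxrankS // submxMr // capmxSr.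
  have E3 : (\rank (M :&: kermx (h e)) <= \rank ((kermx (h e) :&: \big[capmx/1%:M]_(j <- s) kermx (h j)) :&: Sq))%N.
    apply: mxrankS; rewrite !sub_capmx -/M.
    have HM1 : (M :&: kermx (h e) <= M)%MS by apply: capmxSl.
    rewrite capmxSr /= andbC.
    rewrite (submx_trans HM1 (capmxSr _ _)) (submx_trans HM1 (capmxSl _ _)) //.
  apply: (leq_trans IH); rewrite -E1 addnA leq_add2r addnC; exact: leq_add E3 E2.
have K := key (index_enum 'I_r).
have K1 : (\rank ((\big[capmx/1%:M]_(e <- index_enum 'I_r) kermx (h e)) :&: Sq)%MS <= \rank Q)%N.
  apply: mxrankS; apply: hpre => e.
  have : ((\big[capmx/1%:M]_(e <- index_enum 'I_r) kermx (h e)) :&: Sq <= kermx (h e))%MS.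
    apply: submx_trans (capmxSl _ _) _.
    exact: (bigcapmx_inf e).
  by rewrite sub_kermx mulmxA -submxE.
have K2 : (\sum_(e <- index_enum 'I_r) \rank (Sq *m h e) <= r * (\rank Sp' - \rank P))%N.
  rewrite -[X in (X * _)%N]card_ord -sum_nat_const.
  apply: leq_sum => e _.
  have := rank_cok (Sq *m Y e) P.
  have : (\rank (Sq *m Y e + P)%MS <= \rank Sp')%N.
    apply: mxrankS; rewrite (addsmx_sub (Sq *m Y e) P Sp') addsmxSl andbT.
    apply: submx_trans (addsmxSr _ _).
    by rewrite (sumsmx_sup e) // genmxE.
  rewrite /h mulmxA. lia.
rewrite leq_subLR; apply: (leq_trans K); exact: leq_add K1 K2.
Qed.
End Helpers.

Section Filt.
Local Open Scope ring_scope.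

Lemma sfS (K : fieldType) (r n0 n1 : nat) (A : 'I_r -> 'M[K]_(n0, n1)) (B : 'I_r -> 'M[K]_(n1, n0)) k :
  socle_filt A B k.+1 =
  if odd k.+1 then ((socle_filt A B k).1, ((socle_filt A B k).2 + pre1 B (socle_filt A B k).1)%MS)
  else (((socle_filt A B k).1 + pre0 A (socle_filt A B k).2)%MS, (socle_filt A B k).2).
Proof. by []. Qed.

Lemma sf_sub (K : fieldType) (r n0 n1 : nat) (A : 'I_r -> 'M[K]_(n0, n1)) (B : 'I_r -> 'M[K]_(n1, n0)) k :
  submod A B (socle_filt A B k).
Proof.
elim: k => [|k IH] e.
  by rewrite /= !mul0mx !sub0mx.
rewrite sfS; case: (odd k.+1) => /=; have [h1 h2] := IH e; split.
- by apply: submx_trans h1 (addsmxSl _ _).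
- rewrite addsmxMr addsmx_sub h2 /=.
  by move: (submx_refl (pre1 B (socle_filt A B k).1)) => /pre1M; apply.
- rewrite addsmxMr addsmx_sub h1 /=.
  by move: (submx_refl (pre0 A (socle_filt A B k).2)) => /pre0M; apply.
- by apply: submx_trans h2 (addsmxSl _ _).
Qed.

Lemma sf_step (K : fieldType) (r n0 n1 : nat) (A : 'I_r -> 'M[K]_(n0, n1)) (B : 'I_r -> 'M[K]_(n1, n0)) k :
  gsubset (socle_filt A B k) (socle_filt A B k.+1).
Proof. by rewrite /gsubset sfS; case: (odd k.+1) => /=; rewrite addsmxSl. Qed.

Lemma sf_mono (K : fieldType) (r n0 n1 : nat) (A : 'I_r -> 'M[K]_(n0, n1)) (B : 'I_r -> 'M[K]_(n1, n0)) k l :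
  (k <= l)%N -> gsubset (socle_filt A B k) (socle_filt A B l).
Proof.
move=> /subnKC <-; elim: (l - k)%N => [|d [IH1 IH2]]; first by rewrite addn0.
have [h1 h2] := sf_step A B (k + d).
by rewrite addnS; split; [apply: submx_trans h1 | apply: submx_trans h2].
Qed.

End Filt.

Theorem mainTheorem2 (K : fieldType) (r n0 n1 : nat) (orient : 'I_r -> bool)
    (A : 'I_r -> 'M[K]_(n0, n1)) (B : 'I_r -> 'M[K]_(n1, n0)) :
  3 <= r ->
  preproj_rel orient A B ->
  nilpotent_rep A B ->
  forall (j k a b : nat),
    1 <= j -> j < k -> ~~ odd (k - j) ->
    (exists S : gsub K n0 n1,
        submod A B S /\ gsubset (socle_filt A B j) S /\ gsubset S (socle_filt A B k) /\
        gdim (vert j) S - gdim (vert j) (socle_filt A B j) = a /\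
        gdim (vert j.+1) S - gdim (vert j.+1) (socle_filt A B j) = b) ->
    exists (c : nat) (S' : gsub K n0 n1),
        submod A B S' /\ gsubset (socle_filt A B j.-1) S' /\
        gsubset S' (socle_filt A B k.-1) /\
        gdim (vert j.+1) S' - gdim (vert j.+1) (socle_filt A B j.-1) = b /\
        gdim (vert j) S' - gdim (vert j) (socle_filt A B j.-1) = c /\
        c + a <= r * b /\
        (2 <= j -> b <= r * c).
Proof.
move=> _ [hrel0 hrel1] _ j k a b hj hjk hpar [S [hS [[hjS1 hjS2] [[hSk1 hSk2] [ha hb]]]]].
have hoddk : odd k = odd j.
  by move: hpar; rewrite oddB; [case: (odd k); case: (odd j) | exact: ltnW].
case: j hj hjk hpar hoddk hjS1 hjS2 ha hb => // j' _ hjk _ hoddk hjS1 hjS2 ha hb.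
case: k hjk hoddk hSk1 hSk2 => // k' hjk hoddk hSk1 hSk2.
have hjk' : (j' <= k')%N by rewrite -ltnS ltnW.
have [Mj1 Mj2] := sf_mono A B hjk'.
have sfSn := sfS A B. have hUsub := sf_sub A B.
move: (socle_filt A B) sfSn hUsub Mj1 Mj2 hjS1 hjS2 hSk1 hSk2 ha hb =>
  U sfSn hUsub Mj1 Mj2 hjS1 hjS2 hSk1 hSk2 ha hb.
rewrite /gdim /vert /= in ha hb hSk1 hSk2 *.
case hjo : (~~ odd j').
- (* j odd: p = vertex 1 *)
  have E1 : (U j'.+1).1 = (U j').1 by rewrite sfSn /= hjo.
  have E2 : (U j'.+1).2 = ((U j').2 + pre1 B (U j').1)%MS by rewrite sfSn /= hjo.
  have Ek : (U k'.+1).1 = (U k').1 by rewrite sfSn hoddk /= hjo.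
  rewrite hjo /= in ha hb *.
  rewrite E1 in hb hjS1.
  rewrite Ek in hSk1.
  set Sp' := ((U j').2 + \sum_(e<r) <<S.1 *m A e>>)%MS.
  have hS' : (Sp' <= S.2)%MS.
    rewrite (addsmx_sub (U j').2 _ S.2); apply/andP; split.
      by apply: submx_trans hjS2; rewrite E2 addsmxSl.
    by apply/sumsmx_subP => e _; rewrite genmxE; case: (hS e).
  exists (\rank Sp' - \rank (U j').2)%N, (S.1, Sp').
  split; last split; last split; last split; last split; last split.
  + move=> e /=; split.
      by apply: submx_trans (addsmxSr (U j').2 _); apply: (sumsmx_sup e) => //; rewrite genmxE.
    by apply: submx_trans (submxMr _ hS') _; case: (hS e).
  + by split => //=; rewrite addsmxSl.
  + split => //=; rewrite (addsmx_sub (U j').2 _ (U k').2) Mj2 /=.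
    apply/sumsmx_subP => e _; rewrite genmxE.
    by apply: submx_trans (submxMr _ hSk1) _; case: (hUsub k' e).
  + by [].
  + by [].
  + rewrite -ha -hb.
    rewrite /Sp'; apply: (part1 (X := B) (Y := A) (eps := eps_bwd K orient)) => //.
    * by move=> e; rewrite /eps_bwd /eps_fwd; case: (orient e); rewrite ?opprK ?oppr_eq0 oner_eq0.
    * by move=> e; case: (hS e).
    * by move=> e; case: (hUsub j' e).
    * move=> m v hv; rewrite E2; apply: submx_trans (addsmxSr _ _).
      by apply/pre1M.
  + move=> hj2; rewrite -hb; apply: part2.
    have [j'' Ej] : exists j'', j' = j''.+1 by case: (j') hj2 => // j'' _; exists j''.
    rewrite Ej in hjo *; move=> m w hw.
    have F1 : (U j''.+1).1 = ((U j'').1 + pre0 A (U j'').2)%MS.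
      by rewrite sfSn /=; move: hjo => /= /negPn ->.
    have F2 : (U j''.+1).2 = (U j'').2.
      by rewrite sfSn /=; move: hjo => /= /negPn ->.
    rewrite F1; apply: submx_trans (addsmxSr _ _); apply/pre0M => e.
    by rewrite -F2.
- (* j even: p = vertex 0 *)
  have E2 : (U j'.+1).2 = (U j').2 by rewrite sfSn /= hjo.
  have E1 : (U j'.+1).1 = ((U j').1 + pre0 A (U j').2)%MS by rewrite sfSn /= hjo.
  have Ek : (U k'.+1).2 = (U k').2 by rewrite sfSn hoddk /= hjo.
  rewrite hjo /= in ha hb *.
  rewrite E2 in hb hjS2.
  rewrite Ek in hSk2.
  set Sp' := ((U j').1 + \sum_(e<r) <<S.2 *m B e>>)%MS.
  have hS' : (Sp' <= S.1)%MS.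
    rewrite (addsmx_sub (U j').1 _ S.1); apply/andP; split.
      by apply: submx_trans hjS1; rewrite E1 addsmxSl.
    by apply/sumsmx_subP => e _; rewrite genmxE; case: (hS e).
  exists (\rank Sp' - \rank (U j').1)%N, (Sp', S.2).
  split; last split; last split; last split; last split; last split.
  + move=> e /=; split.
      by apply: submx_trans (submxMr _ hS') _; case: (hS e).
    by apply: submx_trans (addsmxSr (U j').1 _); apply: (sumsmx_sup e) => //; rewrite genmxE.
  + by split => //=; rewrite addsmxSl.
  + split => //=; rewrite (addsmx_sub (U j').1 _ (U k').1) Mj1 /=.
    apply/sumsmx_subP => e _; rewrite genmxE.
    by apply: submx_trans (submxMr _ hSk2) _; case: (hUsub k' e).
  + by [].
  + by [].
  + rewrite -ha -hb.
    rewrite /Sp'; apply: (part1 (X := A) (Y := B) (eps := eps_fwd K orient)) => //.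
    * by move=> e; rewrite /eps_fwd; case: (orient e); rewrite ?oppr_eq0 oner_eq0.
    * by move=> e; case: (hS e).
    * by move=> e; case: (hUsub j' e).
    * move=> m v hv; rewrite E1; apply: submx_trans (addsmxSr _ _).
      by apply/pre0M.
  + move=> hj2; rewrite -hb; apply: part2.
    have [j'' Ej] : exists j'', j' = j''.+1 by case: (j') hj2 => // j'' _; exists j''.
    rewrite Ej in hjo *; move=> m w hw.
    have F1 : (U j''.+1).2 = ((U j'').2 + pre1 B (U j'').1)%MS.
      by rewrite sfSn /=; move: hjo => /= /negbFE ->.
    have F2 : (U j''.+1).1 = (U j'').1.
      by rewrite sfSn /=; move: hjo => /= /negbFE ->.
    rewrite F1; apply: submx_trans (addsmxSr _ _); apply/pre1M => e.
    by rewrite -F2.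
Qed.
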